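(* Assume excitatory coupling: $\varepsilon_{ij}\ge0$ for all $i,j$ and $\varepsilon>0$, with $U(\tau)+\varepsilon<1$. Then for every ordering $\mathcal O$ the following hold. 1. For each $i$, $p_{i,0}>p_{i,1}>\dots>p_{i,k_i}=1$. 2. $A_{ij}(\mathcal O)\le 0$ for all $j\neq i$, and $A_0>1$. 3. Every eigenvalue $\lambda$ of $A(\mathcal O)$ lies in the closed disk $\{z\in\mathbb C: |z-A_0|\le A_0-1\}$. This disk lies outside the open unit disk and touches the unit circle only at $z=1$; in particular $|\lambda|\ge1$.
   Context: Let $U$ be a twice continuously differentiable, strictly increasing function on an interval $I\subseteq\mathbb R$ containing $[0,1]$. Assume $U'>0$ and $U''<0$ on $I$, $U(0)=0$ and $U(1)=1$; $U^{-1}$ denotes its inverse. Fix $N\ge 2$ and a delay $\tau\in(0,1)$. For each $i$ fix a nonempty set $\mathrm{Pre}(i)\subseteq\{1,\dots,N\}\setminus\{i\}$ and put $k_i=|\mathrm{Pre}(i)|$. Fix real couplings $\varepsilon_{ij}$ with $\varepsilon_{ij}\neq0$ if and only if $j\in\mathrm{Pre}(i)$, normalized so that $\sum_j\varepsilon_{ij}=\varepsilon$ for every $i$. An ordering $\mathcal O$ is a choice, for each $i$, of an enumeration $j_1(i),\dots,j_{k_i}(i)$ of $\mathrm{Pre}(i)$. For $n\in\{0,\dots,k_i\}$ define $$p_{i,n}=\frac{U'\Big(U^{-1}\big(U(\tau)+\sum_{m=1}^{n}\varepsilon_{ij_m(i)}\big)\Big)}{U'\big(U^{-1}(U(\tau)+\varepsilon)\big)}.$$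 The stability matrix $A(\mathcal O)$ has entries - $A_{ii}=p_{i,0}$; - $A_{ij}=p_{i,n}-p_{i,n-1}$ if $j=j_n(i)$; - $A_{ij}=0$ if $j\notin\mathrm{Pre}(i)\cup\{i\}$. Write $A_0:=p_{i,0}=U'(\tau)/U'\big(U^{-1}(U(\tau)+\varepsilon)\big)$, which does not depend on $i$. *)

(* Defs.v *)
From Stdlib Require Import Reals Lra List.
Import ListNotations.
Open Scope R_scope.

Fixpoint sumN (n : nat) (f : nat -> R) : R :=
  match n with
  | O => 0
  | S m => sumN m f + f m
  end.

(* 0-based position of j in l (length l if absent) *)
Fixpoint idx (j : nat) (l : list nat) : nat :=
  match l with
  | nil => O
  | x :: l' => if Nat.eqb x j then O else S (idx j l')
  end.

(* sum_{m=1}^{n} eps_{i j_m(i)}, where Ord i = [j_1(i); ...; j_{k_i}(i)] *)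
Definition partial_sum (epsi : nat -> R) (Oi : list nat) (n : nat) : R :=
  fold_right Rplus 0 (map epsi (firstn n Oi)).

(* p_{i,n}; U1 = U', Uinv = U^{-1}, epsT = epsilon, O i = ordering of Pre(i) *)
Definition p_coef (U U1 Uinv : R -> R) (tau epsT : R) (eps : nat -> nat -> R)
  (Ord : nat -> list nat) (i n : nat) : R :=
  U1 (Uinv (U tau + partial_sum (eps i) (Ord i) n)) / U1 (Uinv (U tau + epsT)).

Definition stabA (U U1 Uinv : R -> R) (tau epsT : R) (eps : nat -> nat -> R)
  (Ord : nat -> list nat) (i j : nat) : R :=
  let p := p_coef U U1 Uinv tau epsT eps Ord i in
  if Nat.eqb i j then p 0%nat
  else if in_dec Nat.eq_dec j (Ord i) then p (S (idx j (Ord i))) - p (idx j (Ord i))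
  else 0.

(* (lr + i li) is a complex eigenvalue of the real N x N matrix A:
   there is a nonzero complex vector v = vr + i vi with A v = lambda v. *)
Definition is_eigenvalue (N : nat) (A : nat -> nat -> R) (lr li : R) : Prop :=
  exists vr vi : nat -> R,
    (exists k, (k < N)%nat /\ (vr k <> 0 \/ vi k <> 0)) /\
    forall i, (i < N)%nat ->
      sumN N (fun j => A i j * vr j) = lr * vr i - li * vi i /\
      sumN N (fun j => A i j * vi j) = lr * vi i + li * vr i.

Definition cmod (x y : R) : R := sqrt (x * x + y * y).

(* Main.v *)
Require Import Defs.
From Stdlib Require Import Reals Lra List Lia.
From Stdlib Require Import Ranalysis5.
Open Scope R_scope.

Lemma cmod_nonneg x y : 0 <= cmod x y.
Proof. apply sqrt_pos. Qed.

Lemma cmod_sq x y : cmod x y * cmod x y = x*x + y*y.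
Proof. unfold cmod. apply sqrt_sqrt. nra. Qed.

Lemma sq_le_cmod a b : 0 <= a -> 0 <= b -> a*a <= b*b -> a <= b.
Proof. intros; nra. Qed.

Lemma ctri a b c d : cmod (a+b) (c+d) <= cmod a c + cmod b d.
Proof.
  apply sq_le_cmod; try assumption.
  - apply cmod_nonneg.
  - pose proof (cmod_nonneg a c); pose proof (cmod_nonneg b d); lra.
  - rewrite cmod_sq.
    replace ((cmod a c + cmod b d) * (cmod a c + cmod b d)) with
      (cmod a c * cmod a c + cmod b d * cmod b d + 2 * (cmod a c * cmod b d)) by ring.
    rewrite !cmod_sq.
    assert (a*b + c*d <= cmod a c * cmod b d).
    { destruct (Rle_dec (a*b+c*d) 0).
      - pose proof (cmod_nonneg a c); pose proof (cmod_nonneg b d); nra.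
      - apply sq_le_cmod; try assumption; try lra.
        + pose proof (cmod_nonneg a c); pose proof (cmod_nonneg b d); nra.
        + replace (cmod a c * cmod b d * (cmod a c * cmod b d)) with
            ((cmod a c * cmod a c) * (cmod b d * cmod b d)) by ring.
          rewrite !cmod_sq. pose proof (Rle_0_sqr (a*d-b*c)); unfold Rsqr in *; nra. }
    nra.
Qed.

Lemma cmod_scale r x y : cmod (r*x) (r*y) = Rabs r * cmod x y.
Proof.
  unfold cmod. replace (r*x*(r*x) + r*y*(r*y)) with (Rsqr r * (x*x+y*y)) by (unfold Rsqr; ring).
  rewrite sqrt_mult. rewrite sqrt_Rsqr_abs. reflexivity.
  apply Rle_0_sqr. nra.
Qed.

Lemma cmod_mul a b x y : cmod (a*x - b*y) (a*y + b*x) = cmod a b * cmod x y.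
Proof.
  unfold cmod. replace ((a*x - b*y)*(a*x - b*y) + (a*y+b*x)*(a*y+b*x)) with ((a*a+b*b)*(x*x+y*y)) by ring.
  apply sqrt_mult; nra.
Qed.

Lemma cmod00 : cmod 0 0 = 0.
Proof. unfold cmod. replace (0*0+0*0) with 0 by ring. apply sqrt_0. Qed.

Lemma sumN_ext N f g : (forall j, (j < N)%nat -> f j = g j) -> sumN N f = sumN N g.
Proof. induction N; simpl; intros; auto. rewrite IHN by (intros; apply H; lia). rewrite H by lia. auto. Qed.

Lemma sumN_plus N f g : sumN N (fun j => f j + g j) = sumN N f + sumN N g.
Proof. induction N; simpl; [ring|rewrite IHN; ring]. Qed.

Lemma sumN_opp N f : sumN N (fun j => - f j) = - sumN N f.
Proof. induction N; simpl; [ring|rewrite IHN; ring]. Qed.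

Lemma sumN_scal N f c : sumN N (fun j => f j * c) = sumN N f * c.
Proof. induction N; simpl; [ring|rewrite IHN; ring]. Qed.

Lemma sumN_le N f g : (forall j, (j < N)%nat -> f j <= g j) -> sumN N f <= sumN N g.
Proof. induction N; simpl; intros; [lra|]. pose proof (H N ltac:(lia)). assert (sumN N f <= sumN N g) by (apply IHN; intros; apply H; lia). lra. Qed.

Lemma sumN_zero N f : (forall j, (j < N)%nat -> f j = 0) -> sumN N f = 0.
Proof. intros. rewrite (sumN_ext N f (fun _ => 0)) by auto. clear. induction N; simpl; [ring|rewrite IHN; ring]. Qed.

Lemma sumN_delta N x c : (x < N)%nat -> sumN N (fun j => if Nat.eqb j x then c else 0) = c.
Proof.
  induction N; intros; [lia|]. simpl.
  destruct (Nat.eq_dec x N).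
  - subst. rewrite Nat.eqb_refl. rewrite sumN_zero. ring.
    intros. destruct (Nat.eqb_spec j N); [lia|auto].
  - rewrite IHN by lia. destruct (Nat.eqb_spec N x); [lia|ring].
Qed.

Lemma sumN_list N f l : NoDup l -> (forall j, In j l -> (j < N)%nat) ->
  sumN N (fun j => if in_dec Nat.eq_dec j l then f j else 0) = fold_right Rplus 0 (map f l).
Proof.
  induction l as [|x l IH]; intros Hnd Hin; simpl.
  - apply sumN_zero; auto.
  - inversion Hnd; subst.
    rewrite (sumN_ext N _ (fun j => (if Nat.eqb j x then f x else 0) + (if in_dec Nat.eq_dec j l then f j else 0))).
    + rewrite sumN_plus, sumN_delta, IH; auto. intros; apply Hin; simpl; auto. apply Hin; simpl; auto.
    + intros j _. destruct (Nat.eqb_spec j x).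
      * subst. destruct (in_dec Nat.eq_dec x (x::l)) as [_|n]; [|exfalso; apply n; simpl; auto].
        destruct (in_dec Nat.eq_dec x l); [tauto|]. destruct (Nat.eq_dec x x); [ring|congruence].
      * simpl. destruct (Nat.eq_dec x j); [congruence|]. destruct (in_dec Nat.eq_dec j l); ring.
Qed.

Lemma sumN_support N f l : NoDup l -> (forall j, In j l -> (j < N)%nat) ->
  (forall j, (j < N)%nat -> ~ In j l -> f j = 0) ->
  sumN N f = fold_right Rplus 0 (map f l).
Proof.
  intros. rewrite <- (sumN_list N f l) by auto. apply sumN_ext. intros.
  destruct (in_dec Nat.eq_dec j l); auto.
Qed.

Lemma telescope l q : NoDup l ->
  fold_right Rplus 0 (map (fun j => q (S (idx j l)) - q (idx j l)) l) = q (length l) - q O.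
Proof.
  revert q; induction l as [|x l IH]; intros q Hnd; simpl.
  - ring.
  - inversion Hnd; subst. rewrite Nat.eqb_refl.
    rewrite (map_ext_in _ (fun j => (fun n => q (S n)) (S (idx j l)) - (fun n => q (S n)) (idx j l))).
    + pose proof (IH (fun n => q (S n)) H2) as E; simpl in E; rewrite E. ring.
    + intros j Hj. destruct (Nat.eqb_spec x j); [subst; tauto|reflexivity].
Qed.

Lemma sumN_cmod N c x y :
  cmod (sumN N (fun j => c j * x j)) (sumN N (fun j => c j * y j)) <=
  sumN N (fun j => Rabs (c j) * cmod (x j) (y j)).
Proof.
  induction N; simpl.
  - rewrite cmod00; lra.
  - eapply Rle_trans. apply ctri. rewrite cmod_scale. lra.
Qed.

Lemma exists_max N g : (0 < N)%nat -> exists k, (k < N)%nat /\ forall j, (j < N)%nat -> g j <= g k.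
Proof.
  induction N; intros; [lia|]. destruct N.
  - exists O; split; [lia|]. intros; replace j with O by lia; lra.
  - destruct IHN as [k [Hk Hm]]; [lia|].
    destruct (Rle_dec (g k) (g (S N))).
    + exists (S N); split; [lia|]. intros. destruct (Nat.eq_dec j (S N)); [subst; lra|].
      pose proof (Hm j ltac:(lia)); lra.
    + exists k; split; [lia|]. intros. destruct (Nat.eq_dec j (S N)); [subst; lra|]. apply Hm; lia.
Qed.

Lemma partial_S f l n : (n < length l)%nat ->
  partial_sum f l (S n) = partial_sum f l n + f (nth n l O).
Proof.
  unfold partial_sum. revert n; induction l as [|x l IH]; intros n Hn; simpl in *; [lia|].
  destruct n; simpl. ring. rewrite IH by lia. ring.
Qed.

Lemma fold_nonneg (f : nat -> R) (l : list nat) : (forall j, In j l -> 0 <= f j) -> 0 <= fold_right Rplus 0 (map f l).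
Proof. induction l; simpl; intros; [lra|]. pose proof (H a (or_introl eq_refl)). pose proof (IHl ltac:(auto)). lra. Qed.

Lemma partial_le f l n : (forall j, In j l -> 0 <= f j) ->
  0 <= partial_sum f l n <= partial_sum f l (length l).
Proof.
  unfold partial_sum. intros. rewrite firstn_all.
  assert (E: map f l = map f (firstn n l) ++ map f (skipn n l)) by (rewrite <- map_app, firstn_skipn; auto). rewrite E, fold_right_app.
  assert (forall (l' : list nat) a, fold_right Rplus a (map f l') = fold_right Rplus 0 (map f l') + a).
  { induction l'; simpl; intros; [ring|rewrite IHl'; ring]. }
  rewrite (H0 (firstn n l) (fold_right Rplus 0 (map f (skipn n l)))).
  pose proof (fold_nonneg f (firstn n l) ltac:(intros; apply H; rewrite <- (firstn_skipn n l); apply in_or_app; auto)).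
  pose proof (fold_nonneg f (skipn n l) ltac:(intros; apply H; rewrite <- (firstn_skipn n l); apply in_or_app; auto)).
  lra.
Qed.

Lemma idx_lt j l : In j l -> (idx j l < length l)%nat.
Proof. induction l; simpl; intros; [tauto|]. destruct (Nat.eqb_spec a j); [lia|]. destruct H; [congruence|]. specialize (IHl H); lia. Qed.

Lemma gt1 a d : 0 < d -> d < a -> a / d > 1.
Proof. intros. unfold Rdiv. apply Rlt_gt. apply (Rmult_lt_reg_r d); auto. rewrite Rmult_assoc, Rinv_l by lra. lra. Qed.

Lemma disk A0 x y : 1 < A0 -> cmod (x - A0) y <= A0 - 1 -> 1 <= cmod x y /\ (cmod x y = 1 -> x = 1 /\ y = 0).
Proof.
  intros HA H. pose proof (cmod_sq (x - A0) y). pose proof (cmod_nonneg (x-A0) y).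
  assert (Hq: (x-A0)*(x-A0) + y*y <= (A0-1)*(A0-1)) by nra.
  assert (Hx: 1 <= x) by nra.
  split.
  - unfold cmod. rewrite <- sqrt_1. apply sqrt_le_1_alt. nra.
  - intros E. pose proof (cmod_sq x y). rewrite E in H2. nra.
Qed.

Theorem mainTheorem4
  (U U1 U2 Uinv : R -> R) (I : R -> Prop)
  (HIint : forall x y z, I x -> I z -> x <= y -> y <= z -> I y)
  (HI01 : forall x, 0 <= x <= 1 -> I x)
  (HU1 : forall x, I x -> derivable_pt_lim U x (U1 x))
  (HU2 : forall x, I x -> derivable_pt_lim U1 x (U2 x))
  (HU2c : forall x, I x -> continuity_pt U2 x)
  (HU1pos : forall x, I x -> 0 < U1 x)
  (HU2neg : forall x, I x -> U2 x < 0)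
  (HU0 : U 0 = 0) (HU1' : U 1 = 1)
  (HUinv : forall y, (exists x, I x /\ U x = y) -> I (Uinv y) /\ U (Uinv y) = y)
  (N : nat) (HN : (2 <= N)%nat)
  (tau : R) (Htau : 0 < tau < 1)
  (Pre : nat -> nat -> Prop)
  (HPre : forall i j, (i < N)%nat -> Pre i j -> (j < N)%nat /\ j <> i)
  (HPre_ne : forall i, (i < N)%nat -> exists j, Pre i j)
  (eps : nat -> nat -> R) (epsT : R)
  (Heps_supp : forall i j, (i < N)%nat -> (j < N)%nat -> (eps i j <> 0 <-> Pre i j))
  (Heps_sum : forall i, (i < N)%nat -> sumN N (eps i) = epsT)
  (Hexc : forall i j, (i < N)%nat -> (j < N)%nat -> 0 <= eps i j)
  (HepsT : 0 < epsT)
  (Hsmall : U tau + epsT < 1)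
  (Ord : nat -> list nat)
  (HO_nodup : forall i, (i < N)%nat -> NoDup (Ord i))
  (HO_enum : forall i, (i < N)%nat -> forall j, In j (Ord i) <-> Pre i j) :
  let p := p_coef U U1 Uinv tau epsT eps Ord in
  let A := stabA U U1 Uinv tau epsT eps Ord in
  let A0 := U1 tau / U1 (Uinv (U tau + epsT)) in
  (* 1 *)
  (forall i, (i < N)%nat ->
     (forall n, (n < length (Ord i))%nat -> p i n > p i (S n)) /\
     p i (length (Ord i)) = 1) /\
  (* 2 *)
  (forall i j, (i < N)%nat -> (j < N)%nat -> j <> i -> A i j <= 0) /\
  A0 > 1 /\
  (* 3 *)
  (forall lr li, is_eigenvalue N A lr li -> cmod (lr - A0) li <= A0 - 1) /\
  cmod (1 - A0) 0 <= A0 - 1 /\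
  (forall x y, cmod (x - A0) y <= A0 - 1 -> 1 <= cmod x y /\ (cmod x y = 1 -> x = 1 /\ y = 0)) /\
  (forall lr li, is_eigenvalue N A lr li -> 1 <= cmod lr li).
Proof.
  intros p A A0.
  assert (HI0 : I 0) by (apply HI01; lra).
  assert (HI1 : I 1) by (apply HI01; lra).
  assert (HItau : I tau) by (apply HI01; lra).
  assert (HUc : forall x, I x -> continuity_pt U x).
  { intros x Hx. apply (derivable_continuous_pt U x (exist _ (U1 x) (HU1 x Hx))). }
  assert (Umono : forall x y, I x -> I y -> x < y -> U x < U y).
  { intros x y Hx Hy Hxy. destruct (MVT_cor2 U U1 x y Hxy) as [c [Hc Hc2]].
    - intros c Hc. apply HU1. apply (HIint x c y); tauto.
    - assert (I c) by (apply (HIint x c y); auto; lra).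
      pose proof (HU1pos c H). nra. }
  assert (U1mono : forall x y, I x -> I y -> x < y -> U1 y < U1 x).
  { intros x y Hx Hy Hxy. destruct (MVT_cor2 U1 U2 x y Hxy) as [c [Hc Hc2]].
    - intros c Hc. apply HU2. apply (HIint x c y); tauto.
    - assert (I c) by (apply (HIint x c y); auto; lra).
      pose proof (HU2neg c H). nra. }
  assert (HUtau : 0 < U tau) by (rewrite <- HU0; apply Umono; auto; lra).
  assert (Hinv : forall y, U tau <= y <= U tau + epsT -> I (Uinv y) /\ U (Uinv y) = y).
  { intros y Hy. apply HUinv.
    destruct (f_interv_is_interv U 0 1 y) as [x [Hx1 Hx2]].
    - lra.
    - rewrite HU0, HU1'; lra.
    - intros x Hx. apply HUc, HI01; auto.
    - exists x. split; auto. }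
  assert (Hinvmono : forall y1 y2, U tau <= y1 <= U tau + epsT -> U tau <= y2 <= U tau + epsT ->
     y1 < y2 -> Uinv y1 < Uinv y2).
  { intros y1 y2 H1 H2 H12. destruct (Hinv y1 H1) as [I1 E1]. destruct (Hinv y2 H2) as [I2 E2].
    destruct (Rlt_or_le (Uinv y1) (Uinv y2)) as [|Hle]; auto.
    destruct Hle as [Hlt|Heq].
    - pose proof (Umono _ _ I2 I1 Hlt). lra.
    - rewrite <- Heq in E1. lra. }
  assert (Hinvtau : Uinv (U tau) = tau).
  { destruct (Hinv (U tau)) as [It Et]; [lra|].
    destruct (Rtotal_order (Uinv (U tau)) tau) as [h|[h|h]]; auto.
    - pose proof (Umono _ _ It HItau h); lra.
    - pose proof (Umono _ _ HItau It h); lra. }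
  assert (HD : 0 < U1 (Uinv (U tau + epsT))).
  { apply HU1pos. apply Hinv. lra. }
  assert (Hpos : forall i j, (i < N)%nat -> In j (Ord i) -> 0 < eps i j).
  { intros i j Hi Hj. apply HO_enum in Hj; auto. destruct (HPre i j Hi Hj) as [Hjn _].
    pose proof (Hexc i j Hi Hjn). pose proof (proj2 (Heps_supp i j Hi Hjn) Hj). destruct H; auto. congruence. }
  assert (HinN : forall i j, (i < N)%nat -> In j (Ord i) -> (j < N)%nat).
  { intros i j Hi Hj. apply HO_enum in Hj; auto. apply (HPre i j Hi Hj). }
  assert (Hfull : forall i, (i < N)%nat -> partial_sum (eps i) (Ord i) (length (Ord i)) = epsT).
  { intros i Hi. unfold partial_sum. rewrite firstn_all. rewrite <- (Heps_sum i Hi).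
    symmetry. apply sumN_support; auto.
    - intros j Hj; apply (HinN i j Hi Hj).
    - intros j Hj Hn. destruct (Req_dec (eps i j) 0) as [|Hne]; auto.
      exfalso. apply Hn. apply (HO_enum i Hi). apply (Heps_supp i j Hi Hj); auto. }
  assert (Hrange : forall i n, (i < N)%nat ->
     U tau <= U tau + partial_sum (eps i) (Ord i) n <= U tau + epsT).
  { intros i n Hi. pose proof (partial_le (eps i) (Ord i) n) as Hp.
    rewrite Hfull in Hp by auto. assert (0 <= partial_sum (eps i) (Ord i) n <= epsT); [|lra].
    apply Hp. intros j Hj. pose proof (Hpos i j Hi Hj); lra. }
  assert (Hp0 : forall i, p i O = A0).
  { intros i. unfold p, A0, p_coef, partial_sum. simpl. rewrite Rplus_0_r, Hinvtau. reflexivity. }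
  assert (P1 : forall i, (i < N)%nat ->
     (forall n, (n < length (Ord i))%nat -> p i n > p i (S n)) /\
     p i (length (Ord i)) = 1).
  { intros i Hi. split.
    - intros n Hn. unfold p, p_coef. unfold Rdiv. apply Rlt_gt.
      apply Rmult_lt_compat_r; [apply Rinv_0_lt_compat; lra|].
      apply U1mono.
      + apply Hinv, Hrange; auto.
      + apply Hinv, Hrange; auto.
      + apply Hinvmono; try apply Hrange; auto.
        rewrite partial_S by auto. pose proof (Hpos i (nth n (Ord i) O) Hi (nth_In _ _ Hn)). lra.
    - unfold p, p_coef. rewrite Hfull by auto. unfold Rdiv. apply Rinv_r. lra. }
  assert (P2 : forall i j, (i < N)%nat -> (j < N)%nat -> j <> i -> A i j <= 0).
  { intros i j Hi Hj Hji. unfold A, stabA. destruct (Nat.eqb_spec i j); [congruence|].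
    destruct (in_dec Nat.eq_dec j (Ord i)) as [Hin|]; [|lra].
    pose proof (proj1 (P1 i Hi) _ (idx_lt _ _ Hin)). unfold p in H. lra. }
  assert (HA0 : A0 > 1).
  { unfold A0. apply gt1; auto. apply U1mono; auto. apply Hinv; lra.
    rewrite <- Hinvtau at 1. apply Hinvmono; lra. }
  assert (P3 : forall lr li, is_eigenvalue N A lr li -> cmod (lr - A0) li <= A0 - 1).
  { intros lr li [vr [vi [[k0 [Hk0 Hnz]] Heq]]].
    destruct (exists_max N (fun j => cmod (vr j) (vi j))) as [k [Hk Hmax]]; [lia|].
    simpl in Hmax.
    assert (HM : 0 < cmod (vr k) (vi k)).
    { apply Rlt_le_trans with (cmod (vr k0) (vi k0)); [|apply Hmax; auto].
      unfold cmod. apply sqrt_lt_R0. destruct Hnz; nra. }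
    set (B := fun j => if Nat.eqb j k then 0 else A k j).
    assert (HAkk : A k k = A0) by (unfold A, stabA; rewrite Nat.eqb_refl; apply Hp0).
    assert (Hsplit : forall v, sumN N (fun j => A k j * v j) = A0 * v k + sumN N (fun j => B j * v j)).
    { intros v. rewrite (sumN_ext N _ (fun j => (if Nat.eqb j k then A0 * v k else 0) + B j * v j)).
      - rewrite sumN_plus, sumN_delta; auto.
      - intros j _. unfold B. destruct (Nat.eqb_spec j k); [subst; rewrite HAkk; ring|ring]. }
    assert (HBsum : sumN N B = 1 - A0).
    { rewrite (sumN_support N B (Ord k)); auto.
      - rewrite (map_ext_in _ (fun j => p k (S (idx j (Ord k))) - p k (idx j (Ord k)))).
        + rewrite telescope by auto. rewrite Hp0. rewrite (proj2 (P1 k Hk)). ring.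
        + intros j Hj. unfold B. destruct (Nat.eqb_spec j k).
          * subst. apply HO_enum in Hj; auto. destruct (HPre k k Hk Hj); congruence.
          * unfold A, stabA. destruct (Nat.eqb_spec k j); [congruence|].
            destruct (in_dec Nat.eq_dec j (Ord k)); [reflexivity|tauto].
      - intros j Hj; apply (HinN k j Hk Hj).
      - intros j Hj Hn. unfold B. destruct (Nat.eqb_spec j k); auto.
        unfold A, stabA. destruct (Nat.eqb_spec k j); [congruence|].
        destruct (in_dec Nat.eq_dec j (Ord k)); [tauto|reflexivity]. }
    assert (HBabs : sumN N (fun j => Rabs (B j)) = A0 - 1).
    { rewrite (sumN_ext N _ (fun j => - B j)).
      - rewrite sumN_opp, HBsum. ring.
      - intros j Hj. apply Rabs_left1. unfold B. destruct (Nat.eqb_spec j k); [lra|].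
        apply P2; auto. }
    destruct (Heq k Hk) as [E1 E2]. rewrite Hsplit in E1, E2.
    assert (Hkey : cmod (lr - A0) li * cmod (vr k) (vi k) <= (A0 - 1) * cmod (vr k) (vi k)).
    { rewrite <- cmod_mul.
      replace ((lr - A0) * vr k - li * vi k) with (sumN N (fun j => B j * vr j)) by lra.
      replace ((lr - A0) * vi k + li * vr k) with (sumN N (fun j => B j * vi j)) by lra.
      eapply Rle_trans. apply sumN_cmod.
      rewrite <- HBabs, <- sumN_scal. apply sumN_le. intros j Hj.
      apply Rmult_le_compat_l; [apply Rabs_pos|]. apply Hmax; auto. }
    apply Rmult_le_reg_r with (cmod (vr k) (vi k)); auto. }
  assert (Hdisk : forall x y, cmod (x - A0) y <= A0 - 1 -> 1 <= cmod x y /\ (cmod x y = 1 -> x = 1 /\ y = 0)).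
  { intros; apply (disk A0); auto; lra. }
  split; [exact P1|]. split; [exact P2|]. split; [exact HA0|]. split; [exact P3|].
  split.
  { unfold cmod. replace ((1 - A0) * (1 - A0) + 0 * 0) with ((A0 - 1) * (A0 - 1)) by ring.
    rewrite sqrt_square; lra. }
  split; [exact Hdisk|].
  intros lr li Hev. apply (Hdisk lr li (P3 lr li Hev)).
Qed.
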